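(* Let $\Gamma$ be a compact topological group, $A$ a locally compact space, and $\mathcal I$ a weakly locally maximal $(\Gamma,A)$-groupoid. Then: (i) there exists a split $\Gamma$-space $(Y_{\mathcal I},\varpi,\phi)$ over $A$ with isotropy groupoid $\mathcal I$, and $Y_{\mathcal I}$ is locally compact; (ii) if $(X,\pi,\varphi)$ and $(X',\pi',\varphi')$ are two split $\Gamma$-spaces over $A$ with isotropy groupoid $\mathcal I$ and $X$, $X'$ are locally compact, then there is a unique $\Gamma$-equivariant homeomorphism $F\colon X\to X'$ with $\varphi'=F\circ\varphi$.
   Context: A space is locally compact if it is Hausdorff and every point has a compact neighbourhood. A split $\Gamma$-space over $A$ is a triple $(X,\pi,\varphi)$ where $X$ carries a continuous left $\Gamma$-action, $\pi\colon X\to A$ is a continuous surjection each of whose fibres is a single $\Gamma$-orbit, and $\varphi\colon A\to X$ is a continuous section of $\pi$. A $(\Gamma,A)$-groupoid is a subspace $\mathcal I\subset\Gamma\times A$ such that for every $a\in A$, $\mathcal I_a:=\mathcal I\cap(\Gamma\times\{a\})=\tilde{\mathcal I}_a\times\{a\}$ with $\tilde{\mathcal I}_a$ a closed subgroup of $\Gamma$. It is weakly locally maximal if every $a\in A$ has a neighbourhood $U$ such that $\tilde{\mathcal I}_u\subset\tilde{\mathcal I}_a$ for all $u\in U$. The isotropy groupoid of $(X,\pi,\varphi)$ is $\{(\gamma,a)\in\Gamma\times A:\gamma\in\Gamma_{\varphi(a)}\}$, where $\Gamma_x$ is the stabiliser of $x$. *)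

(* Defs.v *)
From HB Require Import structures.
From mathcomp Require Import all_boot all_classical all_reals topology.
Set Implicit Arguments. Unset Strict Implicit. Unset Printing Implicit Defensive.
Local Open Scope classical_set_scope.

Record topGroup (G : topologicalType) := TopGroup {
  gmul : G -> G -> G;
  ginv : G -> G;
  gone : G;
  gmulA : forall x y z, gmul x (gmul y z) = gmul (gmul x y) z;
  gmul1g : forall x, gmul gone x = x;
  gmulg1 : forall x, gmul x gone = x;
  gmulVg : forall x, gmul (ginv x) x = gone;
  gmulgV : forall x, gmul x (ginv x) = gone;
  gmul_cont : continuous (fun p : G * G => gmul p.1 p.2);
  ginv_cont : continuous ginv }.

Definition loc_compact_space (T : topologicalType) : Prop :=
  hausdorff_space T /\ forall x : T, exists K : set T, nbhs x K /\ compact K.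

Definition cont_left_action (G : topologicalType) (Gm : topGroup G)
  (X : topologicalType) (act : G -> X -> X) : Prop :=
  (forall x, act (gone Gm) x = x) /\
  (forall g h x, act (gmul Gm g h) x = act g (act h x)) /\
  continuous (fun p : G * X => act p.1 p.2).

Definition split_space (G : topologicalType) (Gm : topGroup G)
  (A X : topologicalType) (act : G -> X -> X) (pi : X -> A) (phi : A -> X) : Prop :=
  cont_left_action Gm act /\
  continuous pi /\ (forall a : A, exists x : X, pi x = a) /\
  (forall x : X, pi @^-1` [set pi x] = [set act g x | g in [set: G]]) /\
  continuous phi /\ (forall a : A, pi (phi a) = a).

Definition closed_subgroup (G : topologicalType) (Gm : topGroup G) (S : set G) : Prop :=
  closed S /\ S (gone Gm) /\
  (forall x y, S x -> S y -> S (gmul Gm x y)) /\ (forall x, S x -> S (ginv Gm x)).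

Definition gfibre (G A : Type) (I : set (G * A)) (a : A) : set G := [set g | I (g, a)].

Definition GA_groupoid (G : topologicalType) (Gm : topGroup G) (A : topologicalType)
  (I : set (G * A)) : Prop :=
  forall a : A, closed_subgroup Gm (gfibre I a).

Definition weakly_locally_maximal (G A : topologicalType) (I : set (G * A)) : Prop :=
  forall a : A, exists U : set A, nbhs a U /\
    forall u, U u -> gfibre I u `<=` gfibre I a.

Definition isotropy_groupoid (G A X : Type) (act : G -> X -> X) (phi : A -> X)
  : set (G * A) := [set p | act p.1 (phi p.2) = phi p.2].

Definition homeomorphic_map (X Y : topologicalType) (F : X -> Y) : Prop :=
  continuous F /\ exists H : Y -> X, continuous H /\ cancel F H /\ cancel H F.

(* Main.v *)
Require Import Defs.
From mathcomp Require Import all_boot all_classical all_reals topology generic_quotient.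
Local Open Scope classical_set_scope.
Set Implicit Arguments. Unset Strict Implicit.

Lemma gmulKV (G : topologicalType) (Gm : topGroup G) x y :
  gmul Gm (ginv Gm x) (gmul Gm x y) = y.
Proof. by rewrite gmulA gmulVg gmul1g. Qed.
Lemma gmulVK (G : topologicalType) (Gm : topGroup G) x y :
  gmul Gm x (gmul Gm (ginv Gm x) y) = y.
Proof. by rewrite gmulA gmulgV gmul1g. Qed.
Lemma gmulK (G : topologicalType) (Gm : topGroup G) x y :
  gmul Gm (gmul Gm y x) (ginv Gm x) = y.
Proof. by rewrite -gmulA gmulgV gmulg1. Qed.
Lemma gmulKr (G : topologicalType) (Gm : topGroup G) x y :
  gmul Gm (gmul Gm y (ginv Gm x)) x = y.
Proof. by rewrite -gmulA gmulVg gmulg1. Qed.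
Lemma ginv_uniq (G : topologicalType) (Gm : topGroup G) x y :
  gmul Gm x y = gone Gm -> ginv Gm x = y.
Proof. by move=> h; rewrite -(gmulKV Gm x y) h gmulg1. Qed.
Lemma ginvK (G : topologicalType) (Gm : topGroup G) x : ginv Gm (ginv Gm x) = x.
Proof. by apply: ginv_uniq; rewrite gmulVg. Qed.
Lemma ginvM (G : topologicalType) (Gm : topGroup G) x y :
  ginv Gm (gmul Gm x y) = gmul Gm (ginv Gm y) (ginv Gm x).
Proof. by apply: ginv_uniq; rewrite -gmulA gmulVK gmulgV. Qed.
Lemma ginv1 (G : topologicalType) (Gm : topGroup G) : ginv Gm (gone Gm) = gone Gm.
Proof. by apply: ginv_uniq; rewrite gmul1g. Qed.

Lemma cont_lmul (G : topologicalType) (Gm : topGroup G) g :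
  continuous (gmul Gm g).
Proof.
move=> x; apply: (@continuous_comp _ _ _ (fun y => (g, y)) (fun p : G * G => gmul Gm p.1 p.2)).
  by apply: cvg_pair; [exact: cvg_cst | exact: cvg_id].
exact: gmul_cont.
Qed.
Lemma cont_rmul (G : topologicalType) (Gm : topGroup G) g :
  continuous (gmul Gm ^~ g).
Proof.
move=> x; apply: (@continuous_comp _ _ _ (fun y => (y, g)) (fun p : G * G => gmul Gm p.1 p.2)).
  by apply: cvg_pair; [exact: cvg_id | exact: cvg_cst].
exact: gmul_cont.
Qed.

Lemma sub1 (G A : topologicalType) (Gm : topGroup G) (I : set (G * A)) :
  GA_groupoid Gm I -> forall a, I (gone Gm, a).
Proof. by move=> h a; have [_ [? _]] := h a. Qed.
Lemma subM (G A : topologicalType) (Gm : topGroup G) (I : set (G * A)) :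
  GA_groupoid Gm I -> forall a x y, I (x, a) -> I (y, a) -> I (gmul Gm x y, a).
Proof. by move=> h a x y; have [_ [_ [hm _]]] := h a; apply: hm. Qed.
Lemma subV (G A : topologicalType) (Gm : topGroup G) (I : set (G * A)) :
  GA_groupoid Gm I -> forall a x, I (x, a) -> I (ginv Gm x, a).
Proof. by move=> h a x; have [_ [_ [_ hv]]] := h a; apply: hv. Qed.

Definition eqvr (G A : topologicalType) (Gm : topGroup G) (I : set (G * A))
  (p q : G * A) : bool := `[< p.2 = q.2 /\ I (gmul Gm (ginv Gm p.1) q.1, p.2) >].

Lemma eqvr_refl (G A : topologicalType) (Gm : topGroup G) (I : set (G * A)) :
  GA_groupoid Gm I -> reflexive (eqvr Gm I).
Proof. by move=> h p; apply/asboolP; split => //; rewrite gmulVg; apply: sub1. Qed.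
Lemma eqvr_sym (G A : topologicalType) (Gm : topGroup G) (I : set (G * A)) :
  GA_groupoid Gm I -> symmetric (eqvr Gm I).
Proof.
move=> h p q; apply/asboolP/asboolP => -[e H]; split => //.
  by rewrite -[X in I (X, _)](ginvK Gm) ginvM ginvK -e; apply: subV.
by rewrite -[X in I (X, _)](ginvK Gm) ginvM ginvK -e; apply: subV.
Qed.
Lemma eqvr_trans (G A : topologicalType) (Gm : topGroup G) (I : set (G * A)) :
  GA_groupoid Gm I -> transitive (eqvr Gm I).
Proof.
move=> h q p r /asboolP [e1 H1] /asboolP [e2 H2]; apply/asboolP; split; first by rewrite e1.
move: H2; rewrite -e1 => H2.
have := subM h H1 H2.
by rewrite -gmulA gmulVK.
Qed.

Definition qrel (G A : topologicalType) (Gm : topGroup G) (I : set (G * A))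
  (h : GA_groupoid Gm I) : equiv_rel (G * A) :=
  EquivRel (eqvr Gm I) (eqvr_refl h) (eqvr_sym h) (eqvr_trans h).

Definition Yq (G A : topologicalType) (Gm : topGroup G) (I : set (G * A))
  (h : GA_groupoid Gm I) : topologicalType :=
  quotient_topology {eq_quot (qrel h)}%qT.

Definition qpi (G A : topologicalType) (Gm : topGroup G) (I : set (G * A))
  (h : GA_groupoid Gm I) (p : G * A) : Yq h := (\pi_(Yq h) p)%qT.
Definition rep (G A : topologicalType) (Gm : topGroup G) (I : set (G * A))
  (h : GA_groupoid Gm I) (y : Yq h) : G * A := repr y.

Lemma qpi_rep (G A : topologicalType) (Gm : topGroup G) (I : set (G * A))
  (h : GA_groupoid Gm I) y : qpi h (rep y) = y.
Proof. exact: reprK. Qed.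

Lemma qpiP (G A : topologicalType) (Gm : topGroup G) (I : set (G * A))
  (h : GA_groupoid Gm I) p q :
  qpi h p = qpi h q <-> (p.2 = q.2 /\ I (gmul Gm (ginv Gm p.1) q.1, p.2)).
Proof.
split.
  by move=> e; apply/asboolP; apply/(@eqmodP _ (qrel h)).
by move=> H; apply/(@eqmodP _ (qrel h)); apply/asboolP.
Qed.

Lemma qpi_cont (G A : topologicalType) (Gm : topGroup G) (I : set (G * A))
  (h : GA_groupoid Gm I) : continuous (qpi h).
Proof. exact: pi_continuous. Qed.

Lemma open_sat (G A : topologicalType) (Gm : topGroup G) (I : set (G * A))
  (h : GA_groupoid Gm I) (S : set (G * A)) :
  (forall p q, S p -> qpi h p = qpi h q -> S q) -> open S ->
  open [set y : Yq h | S (rep y)].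
Proof.
move=> sat oS.
rewrite /open /= /quotient_open.
rewrite (_ : _ @^-1` _ = S) // eqEsubset; split => p /=.
  by move=> Sp; apply: (sat _ _ Sp); rewrite -[RHS]qpi_rep.
by move=> Sp; apply: (sat _ _ Sp); rewrite -[LHS]qpi_rep.
Qed.

Lemma cont_fst (X Y : topologicalType) : continuous (@fst X Y).
Proof. move=> [x y]; exact: cvg_fst. Qed.
Lemma cont_snd (X Y : topologicalType) : continuous (@snd X Y).
Proof. move=> [x y]; exact: cvg_snd. Qed.
Lemma cont_pair (T X Y : topologicalType) (f : T -> X) (g : T -> Y) :
  continuous f -> continuous g -> continuous (fun t => (f t, g t)).
Proof. by move=> cf cg t; apply: cvg_pair; [exact: cf|exact: cg]. Qed.
Lemma cont_comp (X Y Z : topologicalType) (f : X -> Y) (g : Y -> Z) :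
  continuous f -> continuous g -> continuous (fun x => g (f x)).
Proof. move=> cf cg x; exact: (continuous_comp (cf x) (cg (f x))). Qed.
Lemma cont_gmul2 (T G : topologicalType) (Gm : topGroup G) (f g : T -> G) :
  continuous f -> continuous g -> continuous (fun x => gmul Gm (f x) (g x)).
Proof.
move=> cf cg t.
apply: (@continuous_comp _ _ _ (fun t => (f t, g t)) (fun p : G * G => gmul Gm p.1 p.2)).
  exact: cont_pair.
exact: gmul_cont.
Qed.
Lemma cont_ginv2 (T G : topologicalType) (Gm : topGroup G) (f : T -> G) :
  continuous f -> continuous (fun x => ginv Gm (f x)).
Proof. move=> cf t; apply: (@continuous_comp _ _ _ f (ginv Gm)); [exact: cf | exact: (@ginv_cont _ Gm)]. Qed.

Lemma rep_qpi (G A : topologicalType) (Gm : topGroup G) (I : set (G * A))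
  (h : GA_groupoid Gm I) p :
  p.2 = (rep (qpi h p)).2 /\ I (gmul Gm (ginv Gm p.1) (rep (qpi h p)).1, p.2).
Proof. by apply: (iffLR (qpiP h _ _)); rewrite qpi_rep. Qed.

Definition actY (G A : topologicalType) (Gm : topGroup G) (I : set (G * A))
  (h : GA_groupoid Gm I) (k : G) (y : Yq h) : Yq h :=
  qpi h (gmul Gm k (rep y).1, (rep y).2).
Definition varpiY (G A : topologicalType) (Gm : topGroup G) (I : set (G * A))
  (h : GA_groupoid Gm I) (y : Yq h) : A := (rep y).2.
Definition phiY (G A : topologicalType) (Gm : topGroup G) (I : set (G * A))
  (h : GA_groupoid Gm I) (a : A) : Yq h := qpi h (gone Gm, a).

Lemma actY_qpi (G A : topologicalType) (Gm : topGroup G) (I : set (G * A))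
  (h : GA_groupoid Gm I) k p : actY k (qpi h p) = qpi h (gmul Gm k p.1, p.2).
Proof.
rewrite /actY; have [e H] := rep_qpi h p.
apply/(qpiP h) => /=; rewrite -e; split => //.
rewrite ginvM -gmulA gmulKV -[X in I (X, _)](ginvK Gm) ginvM ginvK.
exact: subV.
Qed.

Lemma varpiY_qpi (G A : topologicalType) (Gm : topGroup G) (I : set (G * A))
  (h : GA_groupoid Gm I) p : varpiY (qpi h p) = p.2.
Proof. exact: (esym (rep_qpi h p).1). Qed.

Lemma actY1 (G A : topologicalType) (Gm : topGroup G) (I : set (G * A))
  (h : GA_groupoid Gm I) (y : Yq h) : actY (gone Gm) y = y.
Proof. by rewrite /actY gmul1g -surjective_pairing qpi_rep. Qed.

Lemma actYM (G A : topologicalType) (Gm : topGroup G) (I : set (G * A))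
  (h : GA_groupoid Gm I) g k (y : Yq h) : actY (gmul Gm g k) y = actY g (actY k y).
Proof.
have -> : actY k y = qpi h (gmul Gm k (rep y).1, (rep y).2) by [].
by rewrite actY_qpi /= /actY gmulA. Qed.

Lemma varpiY_cont (G A : topologicalType) (Gm : topGroup G) (I : set (G * A))
  (h : GA_groupoid Gm I) : continuous (@varpiY _ _ _ _ h).
Proof.
apply/quotient_continuous.
rewrite (_ : _ \o _ = snd); first exact: cont_snd.
by apply: funext => p /=; exact: varpiY_qpi.
Qed.

Lemma phiY_cont (G A : topologicalType) (Gm : topGroup G) (I : set (G * A))
  (h : GA_groupoid Gm I) : continuous (phiY h).
Proof.
move=> a; apply: (@continuous_comp _ _ _ (fun a => (gone Gm, a)) (qpi h)).
  by apply: cont_pair => //; [move=> b; exact: cvg_cst | move=> b; exact: cvg_id].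
exact: qpi_cont.
Qed.

Lemma fibreY (G A : topologicalType) (Gm : topGroup G) (I : set (G * A))
  (h : GA_groupoid Gm I) (y : Yq h) :
  (@varpiY _ _ _ _ h) @^-1` [set varpiY y] = [set actY g y | g in [set: G]].
Proof.
rewrite eqEsubset; split => y' /=.
  move=> e; exists (gmul Gm (rep y').1 (ginv Gm (rep y).1)) => //.
  by rewrite /actY gmulKr; move: e; rewrite /varpiY => <-; rewrite -surjective_pairing qpi_rep.
by move=> [g _ <-]; rewrite /actY varpiY_qpi.
Qed.

Lemma isoY (G A : topologicalType) (Gm : topGroup G) (I : set (G * A))
  (h : GA_groupoid Gm I) : isotropy_groupoid (@actY _ _ _ _ h) (phiY h) = I.
Proof.
apply: funext => -[g a]; apply: propext; rewrite /isotropy_groupoid /phiY /= actY_qpi /= gmulg1.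
split.
  move=> /(qpiP h) [_] /=; rewrite gmulg1 => H.
  by rewrite -(ginvK Gm g); apply: subV.
move=> H; apply/(qpiP h); split => //=; rewrite gmulg1; exact: subV.
Qed.

Lemma splitY (G A : topologicalType) (Gm : topGroup G) (I : set (G * A))
  (h : GA_groupoid Gm I) :
  continuous (fun p : G * Yq h => actY p.1 p.2) ->
  split_space Gm (@actY _ _ _ _ h) (@varpiY _ _ _ _ h) (phiY h).
Proof.
move=> ac; split; first by split; [exact: actY1 | split; [exact: actYM | exact: ac]].
split; first exact: varpiY_cont.
split; first by move=> a; exists (phiY h a); rewrite /phiY varpiY_qpi.
split; first exact: fibreY.
split; first exact: phiY_cont.
by move=> a; rewrite /phiY varpiY_qpi.
Qed.

Lemma open_coset (G : topologicalType) (Gm : topGroup G) (N H : set G) g :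
  open N -> open [set z | exists n k, N n /\ H k /\ z = gmul Gm (gmul Gm g n) k].
Proof.
move=> oN; rewrite openE => _ [n [k [Nn [Hk ->]]]].
rewrite /interior /=.
pose f z := gmul Gm (gmul Gm (ginv Gm g) z) (ginv Gm k).
have fc : continuous f.
  apply: cont_gmul2; last by move=> ?; exact: cvg_cst.
  apply: cont_gmul2; [by move=> ?; exact: cvg_cst | by move=> ?; exact: cvg_id].
have fz : f (gmul Gm (gmul Gm g n) k) = n by rewrite /f gmulA gmulKV gmulK.
have nN : nbhs n N by apply: open_nbhs_nbhs; split.
rewrite -fz in nN.
have nf : nbhs (gmul Gm (gmul Gm g n) k) (f @^-1` N) by apply: fc.
apply: (filterS _ nf) => z' /= Nz'.
exists (f z'), k; split => //; split => //.
by rewrite /f gmulA gmulVK gmulKr.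
Qed.

Lemma open_prod_set (X Y : topologicalType) (P : set X) (Q : set Y) :
  open P -> open Q -> open [set p : X * Y | Q p.2 /\ P p.1].
Proof.
move=> oP oQ; rewrite openE => -[x y] /= [Qy Px].
exists (P, Q); first by split; apply: open_nbhs_nbhs.
by move=> [a b] [/= Pa Qb].
Qed.

Lemma group_alg (G : topologicalType) (Gm : topGroup G) g1 g2 n n' k k' :
  gmul Gm (gmul Gm g1 n) k = gmul Gm (gmul Gm g2 n') k' ->
  gmul Gm (gmul Gm (ginv Gm n) (gmul Gm (ginv Gm g1) g2)) n' = gmul Gm k (ginv Gm k').
Proof.
move=> e.
have e2 : g2 = gmul Gm (gmul Gm (gmul Gm (gmul Gm g1 n) k) (ginv Gm k')) (ginv Gm n').
  by rewrite e gmulK gmulK.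
rewrite e2 !gmulA gmulKr -!gmulA gmulKV gmulKV.
done.
Qed.

Lemma hausY (G A : topologicalType) (Gm : topGroup G) (I : set (G * A))
  (h : GA_groupoid Gm I) : weakly_locally_maximal I -> hausdorff_space A ->
  hausdorff_space (Yq h).
Proof.
move=> wlm hA y1 y2 cl; apply: contrapT => ne.
pose p1 := rep y1; pose p2 := rep y2.
have [e|na] := pselect (p1.2 = p2.2); last first.
  have : ~ cluster (nbhs p1.2) p2.2 by move=> /hA.
  move=> /existsNP [N1 /existsNP [N2 /not_implyP [nN1 /not_implyP [nN2 NN]]]].
  have [y [W1 W2]] := cl _ _ (varpiY_cont nN1) (varpiY_cont nN2).
  by apply: NN; exists (varpiY y).
set a := p1.2 in e.
have [cH [H1 [HM HV]]] := h a.
pose H := gfibre I a.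
pose x := gmul Gm (ginv Gm p1.1) p2.1.
have nx : ~ H x.
  move=> Hx; apply: ne; rewrite -(qpi_rep y1) -(qpi_rep y2); apply/(qpiP h); split => //.
pose phi (q : G * G) := gmul Gm (gmul Gm (ginv Gm q.1) x) q.2.
have phic : continuous phi.
  apply: cont_gmul2; last exact: cont_snd.
  apply: cont_gmul2; last by move=> ?; exact: cvg_cst.
  by apply: cont_ginv2; exact: cont_fst.
have phi1 : phi (gone Gm, gone Gm) = x by rewrite /phi ginv1 gmul1g gmulg1.
have : nbhs (phi (gone Gm, gone Gm)) (~` H).
  by rewrite phi1; apply: open_nbhs_nbhs; split => //; rewrite openC.
move=> /phic [[V1 V2] [nV1 nV2] VV].
pose N := (V1 `&` V2)°.
have oN : open N by exact: open_interior.
have N1 : N (gone Gm) by rewrite /N /interior /=; apply: filterI.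
have [U [nU UH]] := wlm a.
pose S g := [set p : G * A | U° p.2 /\
   (fun z => exists n k, N n /\ H k /\ z = gmul Gm (gmul Gm g n) k) p.1].
have oS g : open (S g) by apply: open_prod_set; [exact: open_coset | exact: open_interior].
have satS g p q : S g p -> qpi h p = qpi h q -> S g q.
  move=> [Up [n [k [Nn [Hk ep]]]]] /(qpiP h) [epq Ipq]; split; first by rewrite -epq.
  exists n, (gmul Gm k (gmul Gm (ginv Gm p.1) q.1)); split => //; split.
    by apply: HM => //; apply: (UH p.2); [exact: nbhs_singleton | exact: Ipq].
  by rewrite gmulA -ep gmulVK.
have Sp g : S g (g, a).
  split; first exact: nU.
  by exists (gone Gm), (gone Gm); split => //; split => //; rewrite !gmulg1.
have W1 : nbhs y1 [set y : Yq h | S p1.1 (rep y)].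
  apply: open_nbhs_nbhs; split; first by apply: open_sat => //; exact: satS.
  by rewrite /= -/p1 [p1]surjective_pairing.
have W2 : nbhs y2 [set y : Yq h | S p2.1 (rep y)].
  apply: open_nbhs_nbhs; split; first by apply: open_sat => //; exact: satS.
  by rewrite /= -/p2 [p2]surjective_pairing -e.
have [y [[_ [n [k [Nn [Hk e1]]]]] [_ [n' [k' [Nn' [Hk' e2]]]]]]] := cl _ _ W1 W2.
have := group_alg (etrans (esym e1) e2); rewrite -/x => e3.
have : (~` H) (phi (n, n')).
  apply: (VV (n, n')); split; [exact: (nbhs_singleton Nn).1 | exact: (nbhs_singleton Nn').2].
by rewrite /phi /= e3; apply; apply: HM => //; apply: HV.
Qed.

Lemma locY (G A : topologicalType) (Gm : topGroup G) (I : set (G * A))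
  (h : GA_groupoid Gm I) : compact [set: G] -> loc_compact_space A ->
  forall y : Yq h, exists K : set (Yq h), nbhs y K /\ compact K.
Proof.
move=> cG [_ lcA] y.
have [K [nK cK]] := lcA (rep y).2.
exists (qpi h @` ([set: G] `*` K)); split; last first.
  apply: continuous_compact; first by apply: continuous_subspaceT; exact: qpi_cont.
  exact: compact_setX.
pose S := [set p : G * A | K° p.2 /\ [set: G] p.1].
have : nbhs y [set y' : Yq h | S (rep y')].
  apply: open_nbhs_nbhs; split.
    apply: open_sat; last by apply: open_prod_set; [exact: openT | exact: open_interior].
    by move=> p q [Kp _] /(qpiP h) [e _]; split => //; rewrite -e.
  by split.
apply: filterS => y' [Ky' _]; exists (rep y'); last exact: qpi_rep.
by split => //; apply: interior_subset.
Qed.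

Lemma actY_cont (G A : topologicalType) (Gm : topGroup G) (I : set (G * A))
  (h : GA_groupoid Gm I) : compact [set: G] -> weakly_locally_maximal I ->
  continuous (fun p : G * Yq h => actY p.1 p.2).
Proof.
move=> cG wlm [k0 y0] O /= nO.
pose O' := O°; have oO' : open O' by exact: open_interior.
have O'y : O' (actY k0 y0) by exact: nO.
have O'O : O' `<=` O by exact: interior_subset.
pose p0 := rep y0; pose a0 := p0.2.
have [cH [H1 [HM HV]]] := h a0.
pose H := gfibre I a0.
have cpH : compact H by apply: (subclosed_compact cH cG).
pose Ot := qpi h @^-1` O'.
have oOt : open Ot by apply: (iffLR (continuousP _)) => //; exact: qpi_cont.
pose psi (q : G * (G * (G * A))) := (gmul Gm (gmul Gm q.2.1 q.2.2.1) q.1, q.2.2.2).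
have c2 : continuous (fun q : G * (G * (G * A)) => q.2) := @cont_snd _ _.
have c22 : continuous (fun q : G * (G * (G * A)) => q.2.2) := cont_comp c2 (@cont_snd _ _).
have c222 : continuous (fun q : G * (G * (G * A)) => q.2.2.2) := cont_comp c22 (@cont_snd _ _).
have c21 : continuous (fun q : G * (G * (G * A)) => q.2.1) := cont_comp c2 (@cont_fst _ _).
have c221 : continuous (fun q : G * (G * (G * A)) => q.2.2.1) := cont_comp c22 (@cont_fst _ _).
have psic : continuous psi.
  apply: cont_pair => //.
  apply: cont_gmul2; last exact: cont_fst.
  exact: cont_gmul2.
have key : \forall i \near (k0, p0), H `<=` (fun j => Ot (gmul Gm (gmul Gm i.1 i.2.1) j, i.2.2)).
  apply: (iffLR (compact_near_coveringP H) cpH (G * (G * A))%type (nbhs (k0, p0)) (fun i j => Ot (gmul Gm (gmul Gm i.1 i.2.1) j, i.2.2))) => // j Hj.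
  have : nbhs (psi (j, (k0, p0))) Ot.
    apply: open_nbhs_nbhs; split => //.
    rewrite /Ot /psi /=.
    suff -> : qpi h (gmul Gm (gmul Gm k0 p0.1) j, p0.2) = actY k0 y0 by exact: O'y.
    rewrite /actY; apply/(qpiP h) => /=; split => //.
    rewrite -/p0 ginvM -gmulA gmulVg gmulg1.
    exact: HV.
  move=> /psic [[V W] [nV nW] sub].
  by exists (V, W) => // -[j' i] [Vj Wi]; exact: (sub (j', i)).
move: key => [[V M'] [nV nM'] sub].
have [[M U] [nM nU] subMU] := nM'.
have [U1 [nU1 UH]] := wlm a0.
pose S := [set p : G * A | (U `&` U1)° p.2 /\
   (fun z => exists n k, M° n /\ H k /\ z = gmul Gm (gmul Gm (gone Gm) n) k) p.1].
have oS : open S by apply: open_prod_set; [apply: open_coset; exact: open_interior | exact: open_interior].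
have satS p q : S p -> qpi h p = qpi h q -> S q.
  move=> [Up [n [k [Nn [Hk ep]]]]] /(qpiP h) [epq Ipq]; split; first by rewrite -epq.
  exists n, (gmul Gm k (gmul Gm (ginv Gm p.1) q.1)); split => //; split.
    apply: HM => //; apply: (UH p.2); last exact: Ipq.
    by have := interior_subset Up => -[].
  by rewrite gmulA -ep gmulVK.
exists (V, [set y : Yq h | S (rep y)]).
  split => //; apply: open_nbhs_nbhs; split; first by apply: open_sat => //; exact: satS.
  split; first by apply: filterI.
  exists p0.1, (gone Gm); split; first exact: nM.
  by split => //; rewrite gmul1g gmulg1.
move=> [k y] [/= Vk [Uy [n [j [Mn [Hj ey]]]]]].
have [Ua _] := interior_subset Uy.
have Mp : M' (n, (rep y).2) by apply: subMU; split => //; exact: interior_subset.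
have := sub (k, (n, (rep y).2)) (conj Vk Mp) j Hj.
rewrite /Ot /= => HO; apply: O'O.
by rewrite /actY ey gmul1g gmulA.
Qed.
Lemma split_pi_act (G : topologicalType) (Gm : topGroup G) (A X : topologicalType)
  (act : G -> X -> X) (pi : X -> A) (phi : A -> X) : split_space Gm act pi phi ->
  forall g x, pi (act g x) = pi x.
Proof.
move=> [_ [_ [_ [fib _]]]] g x.
have : (pi @^-1` [set pi x]) (act g x) by rewrite fib; exists g.
done.
Qed.

Lemma split_decomp (G : topologicalType) (Gm : topGroup G) (A X : topologicalType)
  (act : G -> X -> X) (pi : X -> A) (phi : A -> X) : split_space Gm act pi phi ->
  forall x, exists g, x = act g (phi (pi x)).
Proof.
move=> hs x; have [[act1 [actM _]] [_ [_ [fib [_ piphi]]]]] := hs.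
have : (pi @^-1` [set pi x]) (phi (pi x)) by rewrite /= piphi.
rewrite fib => -[h _ hx]; exists (ginv Gm h).
by rewrite -hx -actM gmulVg act1.
Qed.

Lemma cont_mu (G : topologicalType) (Gm : topGroup G) (A X : topologicalType)
  (act : G -> X -> X) (pi : X -> A) (phi : A -> X) : split_space Gm act pi phi ->
  continuous (fun p : G * A => act p.1 (phi p.2)).
Proof.
move=> [[_ [_ actc]] [_ [_ [_ [phic _]]]]] p.
apply: (@continuous_comp _ _ _ (fun p : G * A => (p.1, phi p.2)) (fun q : G * X => act q.1 q.2)); last exact: actc.
apply: cvg_pair; first exact: cvg_fst.
apply: (@continuous_comp _ _ _ snd phi); first exact: cvg_snd.
exact: phic.
Qed.

Lemma closed_mu (G : topologicalType) (Gm : topGroup G) (A X : topologicalType)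
  (act : G -> X -> X) (pi : X -> A) (phi : A -> X) : split_space Gm act pi phi ->
  compact [set: G] -> hausdorff_space X ->
  forall C : set (G * A), closed C ->
  closed [set act p.1 (phi p.2) | p in C].
Proof.
move=> hs cG hX C cC x clx; apply: contrapT => nx.
have [_ [pic _]] := hs.
have key : \forall x' \near x, [set: G] `<=` (fun g => forall a, C (g, a) -> act g (phi a) = x' -> False).
  apply: (iffLR (compact_near_coveringP _) cG) => g _.
  have [e|ne] := pselect (act g (phi (pi x)) = x).
  - have nC : ~ C (g, pi x) by move=> Cg; apply: nx; exists (g, pi x).
  have : nbhs (g, pi x) (~` C) by apply: open_nbhs_nbhs; split => //; rewrite openC.
  move=> [[V U] [nV nU] VU].
  exists (V, pi @^-1` U); first by split => //; exact: pic.
  move=> [g' x'] [/= Vg' Ux'] a Ca e'.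
  apply: (VU (g', a)); last exact: Ca.
  split => //=; move: Ux'; by rewrite -e' (split_pi_act hs) (proj2 (proj2 (proj2 (proj2 (proj2 hs))))).
  - have : ~ cluster (nbhs x) (act g (phi (pi x))) by move=> /hX /esym.
  move=> /existsNP [N /existsNP [O /not_implyP [nN /not_implyP [nO NO]]]].
  have := @cont_mu _ _ _ _ _ _ _ hs (g, pi x) O nO; move=> [[V U] [nV nU] VU].
  exists (V, N `&` pi @^-1` U); first by split => //; apply: filterI => //; exact: pic.
  move=> [g' x'] [/= Vg' [Nx' Ux']] a Ca e'.
  apply: NO; exists x'; split => //; rewrite -e'.
  apply: (VU (g', a)); split => //=.
  by move: Ux'; rewrite -e' (split_pi_act hs) (proj2 (proj2 (proj2 (proj2 (proj2 hs))))).
have [y [[[g a] Ca e] Ny]] := clx _ key.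
exact: (Ny g I a Ca e).
Qed.

Lemma quot_cont (G : topologicalType) (Gm : topGroup G) (A X : topologicalType)
  (act : G -> X -> X) (pi : X -> A) (phi : A -> X) : split_space Gm act pi phi ->
  compact [set: G] -> hausdorff_space X ->
  forall (Z : topologicalType) (f : X -> Z),
  continuous (fun p : G * A => f (act p.1 (phi p.2))) -> continuous f.
Proof.
move=> hs cG hX Z f hf; apply/continuous_closedP => D cD.
have cC := (iffLR (continuous_closedP _)) hf D cD.
rewrite (_ : f @^-1` D = [set act p.1 (phi p.2) | p in (fun p : G * A => f (act p.1 (phi p.2))) @^-1` D]).
  exact: (closed_mu hs cG hX cC).
rewrite eqEsubset; split => x.
  move=> Dx; have [g eg] := split_decomp hs x; exists (g, pi x) => //=.
  by rewrite -eg.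
by move=> [p Dp <-].
Qed.

Lemma iso_transfer (G : topologicalType) (Gm : topGroup G) (A X X' : topologicalType)
  (act : G -> X -> X) (act' : G -> X' -> X') (pi : X -> A) (pi' : X' -> A)
  (phi : A -> X) (phi' : A -> X') :
  split_space Gm act pi phi -> split_space Gm act' pi' phi' ->
  isotropy_groupoid act phi = isotropy_groupoid act' phi' ->
  forall g h a, act g (phi a) = act h (phi a) -> act' g (phi' a) = act' h (phi' a).
Proof.
move=> [[act1 [actM _]] _] [[act1' [actM' _]] _] iso g h a e.
have e1 : isotropy_groupoid act phi (gmul Gm (ginv Gm h) g, a).
  by rewrite /isotropy_groupoid /= actM e -actM gmulVg act1.
rewrite iso /isotropy_groupoid /= in e1.
by rewrite -[in RHS]e1 -actM' gmulA gmulgV gmul1g.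
Qed.

Definition Fmap (G : topologicalType) (Gm : topGroup G) (A X X' : topologicalType)
  (act : G -> X -> X) (act' : G -> X' -> X') (pi : X -> A)
  (phi : A -> X) (phi' : A -> X') (hs : split_space Gm act pi phi) (x : X) : X' :=
  act' (sval (cid (split_decomp hs x))) (phi' (pi x)).

Lemma Fmap_mu (G : topologicalType) (Gm : topGroup G) (A X X' : topologicalType)
  (act : G -> X -> X) (act' : G -> X' -> X') (pi : X -> A) (pi' : X' -> A)
  (phi : A -> X) (phi' : A -> X') (hs : split_space Gm act pi phi) :
  split_space Gm act' pi' phi' ->
  isotropy_groupoid act phi = isotropy_groupoid act' phi' ->
  forall g a, Fmap act' phi' hs (act g (phi a)) = act' g (phi' a).
Proof.
move=> hs' iso g a; rewrite /Fmap; case: cid => /= k.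
have hpi : pi (act g (phi a)) = a.
  by rewrite (split_pi_act hs) (proj2 (proj2 (proj2 (proj2 (proj2 hs))))).
rewrite hpi => e.
exact: (iso_transfer hs hs' iso (esym e)).
Qed.

Lemma part2 (G : topologicalType) (Gm : topGroup G) (A : topologicalType) (I : set (G * A)%type) :
  compact [set: G] ->
  (forall (X X' : topologicalType) (act : G -> X -> X) (act' : G -> X' -> X')
     (pi : X -> A) (pi' : X' -> A) (phi : A -> X) (phi' : A -> X'),
     split_space Gm act pi phi -> isotropy_groupoid act phi = I ->
     split_space Gm act' pi' phi' -> isotropy_groupoid act' phi' = I ->
     loc_compact_space X -> loc_compact_space X' ->
     exists! F : X -> X',
       (forall g x, F (act g x) = act' g (F x)) /\ homeomorphic_map F /\
       phi' = F \o phi).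
Proof.
move=> cG X X' act act' pi pi' phi phi' hs iso hs' iso' [hX _] [hX' _].
have isoE : isotropy_groupoid act phi = isotropy_groupoid act' phi' by rewrite iso iso'.
have FM := Fmap_mu hs hs' isoE.
have HM := Fmap_mu hs' hs (esym isoE).
have [[act1 [actM _]] _] := hs.
have [[act1' [actM' _]] _] := hs'.
exists (Fmap act' phi' hs); split.
  split.
    move=> k x; have [g ->] := split_decomp hs x.
    by rewrite -actM !FM actM'.
  split.
    split.
      apply: (quot_cont hs cG hX) => /=.
      under eq_fun do rewrite FM.
      exact: cont_mu hs'.
    exists (Fmap act phi hs'); split.
      apply: (quot_cont hs' cG hX') => /=.
      under eq_fun do rewrite HM.
      exact: cont_mu hs.
    split.
      by move=> x; have [g ->] := split_decomp hs x; rewrite FM HM.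
    by move=> x; have [g ->] := split_decomp hs' x; rewrite HM FM.
  apply: funext => a /=; by rewrite -[phi a]act1 FM act1'.
move=> F' [eqv [_ e]] ; apply: funext => x.
have [g ->] := split_decomp hs x.
by rewrite FM eqv e.
Qed.

Unset Implicit Arguments.

Theorem proposition2p1 (G : topologicalType) (Gm : topGroup G)
  (A : topologicalType) (I : set (G * A)%type) :
  compact [set: G] -> loc_compact_space A ->
  GA_groupoid Gm I -> weakly_locally_maximal I ->
  (exists (Y : topologicalType) (act : G -> Y -> Y) (varpi : Y -> A) (phi : A -> Y),
      split_space Gm act varpi phi /\ isotropy_groupoid act phi = I /\
      loc_compact_space Y) /\
  (forall (X X' : topologicalType) (act : G -> X -> X) (act' : G -> X' -> X')
     (pi : X -> A) (pi' : X' -> A) (phi : A -> X) (phi' : A -> X'),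
     split_space Gm act pi phi -> isotropy_groupoid act phi = I ->
     split_space Gm act' pi' phi' -> isotropy_groupoid act' phi' = I ->
     loc_compact_space X -> loc_compact_space X' ->
     exists! F : X -> X',
       (forall g x, F (act g x) = act' g (F x)) /\ homeomorphic_map F /\
       phi' = F \o phi).
Proof.
move=> cG lcA h wlm; split; last exact: part2.
exists (Yq h), (@actY _ _ _ _ h), (@varpiY _ _ _ _ h), (phiY h).
split; first exact: (@splitY _ _ _ _ h (@actY_cont _ _ _ _ h cG wlm)).
split; first exact: isoY.
split; first exact: (@hausY _ _ _ _ h wlm (proj1 lcA)).
exact: (@locY _ _ _ _ h cG lcA).
Qed.
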